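(* Let $F$ be an algebraically closed field of characteristic different from $2$ and $3$, and let $K_{10}$ be the Kac Jordan superalgebra over $F$ with basis and multiplication as described in the context. Then every maximal subalgebra of $K_{10}$ is, up to an automorphism of $K_{10}$, one of the following: (i) $(K_{10})_{\bar 0}$; (ii) the subalgebra with basis $\{e,f,a,p_1,p_2\}$; (iii) the subalgebra with basis $\{e,f,a+b,c_1,p_1,q_1,p_2+q_2\}$; (iv) the subalgebra with basis $\{e,f,a,b,c_1,p_1,q_1\}$.
   Context: $K_{10}=J_{\bar 0}\oplus J_{\bar 1}$ has even part $J_{\bar 0}$ with basis $e,a,b,c_1,c_2,f$ and odd part $J_{\bar 1}$ with basis $p_1,p_2,q_1,q_2$. The product is supercommutative ($uv=(-1)^{\bar u\bar v}vu$ for homogeneous $u,v$) and determined by the following products (all products of basis elements not listed, up to supercommutativity, are $0$): $e^2=e$, $ea=a$, $eb=b$, $ec_i=c_i$, $ef=0$, $ep_i=\tfrac12p_i$, $eq_i=\tfrac12 q_i$; $f^2=f$, $fp_i=\tfrac12p_i$, $fq_i=\tfrac12 q_i$ ($f$ annihilates $e,a,b,c_1,c_2$); $a^2=4e$, $ap_i=p_i$, $aq_i=-q_i$; $b^2=-4e$, $bp_i=q_i$, $bq_i=-p_i$; $c_1c_2=2e$, $c_1^2=c_2^2=0$, $c_1p_2=q_1$, $c_1q_2=p_1$, $c_1p_1=c_1q_1=0$, $c_2p_1=q_2$, $c_2q_1=p_2$, $c_2p_2=c_2q_2=0$; $a,b,c_1,c_2$ are pairwise orthogonal in the sense that $ab=ac_i=bc_i=0$;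 $p_1p_2=a+2(e-3f)$, $p_1q_1=2c_1$, $p_1q_2=b$, $p_2q_1=-b$, $p_2q_2=-2c_2$, $q_1q_2=a-2(e-3f)$, and $p_i^2=q_i^2=0$ (odd–odd products are skew-symmetric, e.g. $p_2p_1=-p_1p_2$). This is a simple Jordan superalgebra. Subalgebras are understood in the graded sense (spanned by homogeneous elements); a maximal subalgebra is a proper subalgebra not properly contained in any proper subalgebra. Automorphisms are grading-preserving algebra automorphisms. *)

(* Defs.v *)
From HB Require Import structures.
From mathcomp Require Import all_boot all_order all_algebra.
Set Implicit Arguments. Unset Strict Implicit. Unset Printing Implicit Defensive.
Import GRing.Theory.
Local Open Scope ring_scope.

(* Basis indexing: 0 = e, 1 = a, 2 = b, 3 = c1, 4 = c2, 5 = f,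
                   6 = p1, 7 = p2, 8 = q1, 9 = q2. *)

Section K10.
Variable F : fieldType.

Definition V := 'rV[F]_10.

Definition bv (i : nat) : V := delta_mx 0 (inord i).

Definition kE := bv 0. Definition kA := bv 1. Definition kB := bv 2.
Definition kC1 := bv 3. Definition kC2 := bv 4. Definition kF := bv 5.
Definition kP1 := bv 6. Definition kP2 := bv 7.
Definition kQ1 := bv 8. Definition kQ2 := bv 9.

Definition half : F := 2^-1.

Definition tab_le (i j : nat) : V :=
  match i, j with
  | 0, 0 => kE | 0, 1 => kA | 0, 2 => kB | 0, 3 => kC1 | 0, 4 => kC2
  | 0, 6 => half *: kP1 | 0, 7 => half *: kP2
  | 0, 8 => half *: kQ1 | 0, 9 => half *: kQ2
  | 1, 1 => 4%:R *: kE
  | 1, 6 => kP1 | 1, 7 => kP2 | 1, 8 => - kQ1 | 1, 9 => - kQ2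
  | 2, 2 => - (4%:R *: kE)
  | 2, 6 => kQ1 | 2, 7 => kQ2 | 2, 8 => - kP1 | 2, 9 => - kP2
  | 3, 4 => 2%:R *: kE
  | 3, 7 => kQ1 | 3, 9 => kP1
  | 4, 6 => kQ2 | 4, 8 => kP2
  | 5, 5 => kF
  | 5, 6 => half *: kP1 | 5, 7 => half *: kP2
  | 5, 8 => half *: kQ1 | 5, 9 => half *: kQ2
  | 6, 7 => kA + 2%:R *: (kE - 3%:R *: kF)
  | 6, 8 => 2%:R *: kC1
  | 6, 9 => kB
  | 7, 8 => - kB
  | 7, 9 => - (2%:R *: kC2)
  | 8, 9 => kA - 2%:R *: (kE - 3%:R *: kF)
  | _, _ => 0
  end.

Definition is_odd_idx (i : nat) : bool := (6 <= i)%N.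

(* full table, extended by supercommutativity *)
Definition tab (i j : 'I_10) : V :=
  if (i <= j)%N then tab_le i j
  else if is_odd_idx i && is_odd_idx j then - tab_le j i else tab_le j i.

Definition kmul (u v : V) : V :=
  \sum_(i < 10) \sum_(j < 10) (u 0 i * v 0 j) *: tab i j.

Definition evenV : {vspace V} := <<[seq bv i | i <- iota 0 6]>>%VS.
Definition oddV : {vspace V} := <<[seq bv i | i <- iota 6 4]>>%VS.

Definition is_subalg (S : {vspace V}) : Prop :=
  S = ((S :&: evenV) + (S :&: oddV))%VS /\
  (forall u v, u \in S -> v \in S -> kmul u v \in S).

Definition is_maximal_subalg (S : {vspace V}) : Prop :=
  is_subalg S /\ S != fullv /\
  (forall T : {vspace V}, is_subalg T -> T != fullv -> (S <= T)%VS -> T = S).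

Definition is_autom (phi : 'End(V)) : Prop :=
  lker phi = 0%VS /\
  (phi @: evenV <= evenV)%VS /\ (phi @: oddV <= oddV)%VS /\
  (forall u v, phi (kmul u v) = kmul (phi u) (phi v)).

Definition M1 : {vspace V} := evenV.
Definition M2 : {vspace V} := <<[:: kE; kF; kA; kP1; kP2]>>%VS.
Definition M3 : {vspace V} :=
  <<[:: kE; kF; (kA + kB)%R; kC1; kP1; kQ1; (kP2 + kQ2)%R]>>%VS.
Definition M4 : {vspace V} := <<[:: kE; kF; kA; kB; kC1; kP1; kQ1]>>%VS.

End K10.

(* Main.v *)
Require Import Defs.
From HB Require Import structures.
From mathcomp Require Import all_boot all_order all_algebra.
From mathcomp Require Import ring.
From Stdlib Require Import Classical_Prop Classical_Pred_Type.
Local Open Scope ring_scope.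

Set Implicit Arguments. Unset Strict Implicit. Unset Printing Implicit Defensive.
Import GRing.Theory.


Ltac ordc tac := case; do 10 (case; [intro; tac | ]); by [].

Section Base.
Variable F : fieldType.
Local Notation V := (V F).

Definition cc (x : V) (k : nat) : F := x 0 (inord k).

Definition mk (a0 a1 a2 a3 a4 a5 a6 a7 a8 a9 : F) : V :=
  \row_(i < 10) nth 0 [:: a0; a1; a2; a3; a4; a5; a6; a7; a8; a9] i.

Lemma sum10 (R : nmodType) (G : 'I_10 -> R) :
  \sum_(i < 10) G i = G (inord 0) + G (inord 1) + G (inord 2) + G (inord 3) + G (inord 4)
     + G (inord 5) + G (inord 6) + G (inord 7) + G (inord 8) + G (inord 9).
Proof.
rewrite (eq_bigr (fun i : 'I_10 => G (inord (val i)))); last by move=> i _; rewrite inord_val.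
rewrite -(big_mkord xpredT (fun k => G (inord k))).
by rewrite unlock /= !addrA addr0.
Qed.

Lemma vecE (x : V) : x = mk (cc x 0) (cc x 1) (cc x 2) (cc x 3) (cc x 4) (cc x 5) (cc x 6) (cc x 7) (cc x 8) (cc x 9).
Proof.
apply/rowP => i; rewrite mxE /cc.
move: i; ordc ltac:(simpl; congr (x 0 _); apply/val_inj; by rewrite /= inordK).
Qed.

Lemma mkcE a0 a1 a2 a3 a4 a5 a6 a7 a8 a9 :
  (cc (mk a0 a1 a2 a3 a4 a5 a6 a7 a8 a9) 0 = a0) *
  (cc (mk a0 a1 a2 a3 a4 a5 a6 a7 a8 a9) 1 = a1) *
  (cc (mk a0 a1 a2 a3 a4 a5 a6 a7 a8 a9) 2 = a2) *
  (cc (mk a0 a1 a2 a3 a4 a5 a6 a7 a8 a9) 3 = a3) *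
  (cc (mk a0 a1 a2 a3 a4 a5 a6 a7 a8 a9) 4 = a4) *
  (cc (mk a0 a1 a2 a3 a4 a5 a6 a7 a8 a9) 5 = a5) *
  (cc (mk a0 a1 a2 a3 a4 a5 a6 a7 a8 a9) 6 = a6) *
  (cc (mk a0 a1 a2 a3 a4 a5 a6 a7 a8 a9) 7 = a7) *
  (cc (mk a0 a1 a2 a3 a4 a5 a6 a7 a8 a9) 8 = a8) *
  (cc (mk a0 a1 a2 a3 a4 a5 a6 a7 a8 a9) 9 = a9).
Proof. by rewrite /cc !mxE !inordK. Qed.

Lemma mk_eq a0 a1 a2 a3 a4 a5 a6 a7 a8 a9 b0 b1 b2 b3 b4 b5 b6 b7 b8 b9 :
  a0 = b0 -> a1 = b1 -> a2 = b2 -> a3 = b3 -> a4 = b4 -> a5 = b5 -> a6 = b6 -> a7 = b7 -> a8 = b8 -> a9 = b9 ->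
  mk a0 a1 a2 a3 a4 a5 a6 a7 a8 a9 = mk b0 b1 b2 b3 b4 b5 b6 b7 b8 b9.
Proof. by move=> -> -> -> -> -> -> -> -> -> ->. Qed.

Lemma mkD a0 a1 a2 a3 a4 a5 a6 a7 a8 a9 b0 b1 b2 b3 b4 b5 b6 b7 b8 b9 :
  mk a0 a1 a2 a3 a4 a5 a6 a7 a8 a9 + mk b0 b1 b2 b3 b4 b5 b6 b7 b8 b9 =
  mk (a0+b0) (a1+b1) (a2+b2) (a3+b3) (a4+b4) (a5+b5) (a6+b6) (a7+b7) (a8+b8) (a9+b9).
Proof.
apply/rowP => i; rewrite !mxE.
move: i; ordc ltac:(by []).
Qed.

Lemma mkZ c a0 a1 a2 a3 a4 a5 a6 a7 a8 a9 :
  c *: mk a0 a1 a2 a3 a4 a5 a6 a7 a8 a9 =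
  mk (c*a0) (c*a1) (c*a2) (c*a3) (c*a4) (c*a5) (c*a6) (c*a7) (c*a8) (c*a9).
Proof.
apply/rowP => i; rewrite !mxE.
move: i; ordc ltac:(by []).
Qed.

Lemma mkN a0 a1 a2 a3 a4 a5 a6 a7 a8 a9 :
  - mk a0 a1 a2 a3 a4 a5 a6 a7 a8 a9 =
  mk (-a0) (-a1) (-a2) (-a3) (-a4) (-a5) (-a6) (-a7) (-a8) (-a9).
Proof.
apply/rowP => i; rewrite !mxE.
move: i; ordc ltac:(by []).
Qed.

Lemma mk0 : (0 : V) = mk 0 0 0 0 0 0 0 0 0 0.
Proof.
apply/rowP => i; rewrite !mxE.
move: i; ordc ltac:(by []).
Qed.

Lemma bvE k : (k < 10)%N -> bv F k =
  mk (k == 0)%:R (k == 1)%:R (k == 2)%:R (k == 3)%:R (k == 4)%:R (k == 5)%:R (k == 6)%:R (k == 7)%:R (k == 8)%:R (k == 9)%:R.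
Proof.
move=> Hk; apply/rowP => i; rewrite !mxE /=.
have e : forall j : 'I_10, (j == inord k) = (k == j) by move=> j; rewrite -val_eqE /= inordK // eq_sym.
rewrite e; move: i; ordc ltac:(by []).
Qed.

Definition kform (x y : V) : V := mk
  ((cc x 0 * cc y 0) + (4%:R * (cc x 1 * cc y 1)) + (- (4%:R * (cc x 2 * cc y 2))) + (2%:R * (cc x 3 * cc y 4)) + (2%:R * (cc x 4 * cc y 3)) + (2%:R * (cc x 6 * cc y 7)) + (- (2%:R * (cc x 7 * cc y 6))) + (- (2%:R * (cc x 8 * cc y 9))) + (2%:R * (cc x 9 * cc y 8)))
  ((cc x 0 * cc y 1) + (cc x 1 * cc y 0) + (cc x 6 * cc y 7) + (- (cc x 7 * cc y 6)) + (cc x 8 * cc y 9) + (- (cc x 9 * cc y 8)))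
  ((cc x 0 * cc y 2) + (cc x 2 * cc y 0) + (cc x 6 * cc y 9) + (- (cc x 7 * cc y 8)) + (cc x 8 * cc y 7) + (- (cc x 9 * cc y 6)))
  ((cc x 0 * cc y 3) + (cc x 3 * cc y 0) + (2%:R * (cc x 6 * cc y 8)) + (- (2%:R * (cc x 8 * cc y 6))))
  ((cc x 0 * cc y 4) + (cc x 4 * cc y 0) + (- (2%:R * (cc x 7 * cc y 9))) + (2%:R * (cc x 9 * cc y 7)))
  ((cc x 5 * cc y 5) + (- (6%:R * (cc x 6 * cc y 7))) + (6%:R * (cc x 7 * cc y 6)) + (6%:R * (cc x 8 * cc y 9)) + (- (6%:R * (cc x 9 * cc y 8))))
  ((Defs.half F * (cc x 0 * cc y 6)) + (cc x 1 * cc y 6) + (- (cc x 2 * cc y 8)) + (cc x 3 * cc y 9) + (Defs.half F * (cc x 5 * cc y 6)) + (Defs.half F * (cc x 6 * cc y 0)) + (cc x 6 * cc y 1) + (Defs.half F * (cc x 6 * cc y 5)) + (- (cc x 8 * cc y 2)) + (cc x 9 * cc y 3))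
  ((Defs.half F * (cc x 0 * cc y 7)) + (cc x 1 * cc y 7) + (- (cc x 2 * cc y 9)) + (cc x 4 * cc y 8) + (Defs.half F * (cc x 5 * cc y 7)) + (Defs.half F * (cc x 7 * cc y 0)) + (cc x 7 * cc y 1) + (Defs.half F * (cc x 7 * cc y 5)) + (cc x 8 * cc y 4) + (- (cc x 9 * cc y 2)))
  ((Defs.half F * (cc x 0 * cc y 8)) + (- (cc x 1 * cc y 8)) + (cc x 2 * cc y 6) + (cc x 3 * cc y 7) + (Defs.half F * (cc x 5 * cc y 8)) + (cc x 6 * cc y 2) + (cc x 7 * cc y 3) + (Defs.half F * (cc x 8 * cc y 0)) + (- (cc x 8 * cc y 1)) + (Defs.half F * (cc x 8 * cc y 5)))
  ((Defs.half F * (cc x 0 * cc y 9)) + (- (cc x 1 * cc y 9)) + (cc x 2 * cc y 7) + (cc x 4 * cc y 6) + (Defs.half F * (cc x 5 * cc y 9)) + (cc x 6 * cc y 4) + (cc x 7 * cc y 2) + (Defs.half F * (cc x 9 * cc y 0)) + (- (cc x 9 * cc y 1)) + (Defs.half F * (cc x 9 * cc y 5))).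

Lemma kmulE (x y : V) : kmul x y = kform x y.
Proof.
rewrite /kmul /kform sum10 !sum10 /tab !inordK //= /tab_le /=.
rewrite /kE /kA /kB /kC1 /kC2 /kF /kP1 /kP2 /kQ1 /kQ2 !bvE //= ?scaler0 ?addr0 ?add0r.
rewrite !(mkZ, mkN, mkD) /cc.
by apply: mk_eq; ring.
Qed.

Lemma kmul_mk a0 a1 a2 a3 a4 a5 a6 a7 a8 a9 b0 b1 b2 b3 b4 b5 b6 b7 b8 b9 :
  kmul (mk a0 a1 a2 a3 a4 a5 a6 a7 a8 a9) (mk b0 b1 b2 b3 b4 b5 b6 b7 b8 b9) = mk
  ((a0 * b0) + (4%:R * (a1 * b1)) + (- (4%:R * (a2 * b2))) + (2%:R * (a3 * b4)) + (2%:R * (a4 * b3)) + (2%:R * (a6 * b7)) + (- (2%:R * (a7 * b6))) + (- (2%:R * (a8 * b9))) + (2%:R * (a9 * b8)))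
  ((a0 * b1) + (a1 * b0) + (a6 * b7) + (- (a7 * b6)) + (a8 * b9) + (- (a9 * b8)))
  ((a0 * b2) + (a2 * b0) + (a6 * b9) + (- (a7 * b8)) + (a8 * b7) + (- (a9 * b6)))
  ((a0 * b3) + (a3 * b0) + (2%:R * (a6 * b8)) + (- (2%:R * (a8 * b6))))
  ((a0 * b4) + (a4 * b0) + (- (2%:R * (a7 * b9))) + (2%:R * (a9 * b7)))
  ((a5 * b5) + (- (6%:R * (a6 * b7))) + (6%:R * (a7 * b6)) + (6%:R * (a8 * b9)) + (- (6%:R * (a9 * b8))))
  ((Defs.half F * (a0 * b6)) + (a1 * b6) + (- (a2 * b8)) + (a3 * b9) + (Defs.half F * (a5 * b6)) + (Defs.half F * (a6 * b0)) + (a6 * b1) + (Defs.half F * (a6 * b5)) + (- (a8 * b2)) + (a9 * b3))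
  ((Defs.half F * (a0 * b7)) + (a1 * b7) + (- (a2 * b9)) + (a4 * b8) + (Defs.half F * (a5 * b7)) + (Defs.half F * (a7 * b0)) + (a7 * b1) + (Defs.half F * (a7 * b5)) + (a8 * b4) + (- (a9 * b2)))
  ((Defs.half F * (a0 * b8)) + (- (a1 * b8)) + (a2 * b6) + (a3 * b7) + (Defs.half F * (a5 * b8)) + (a6 * b2) + (a7 * b3) + (Defs.half F * (a8 * b0)) + (- (a8 * b1)) + (Defs.half F * (a8 * b5)))
  ((Defs.half F * (a0 * b9)) + (- (a1 * b9)) + (a2 * b7) + (a4 * b6) + (Defs.half F * (a5 * b9)) + (a6 * b4) + (a7 * b2) + (Defs.half F * (a9 * b0)) + (- (a9 * b1)) + (Defs.half F * (a9 * b5))).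
Proof. by rewrite kmulE /kform !mkcE. Qed.

End Base.


Section Two.
Variable F : fieldType.
Local Notation V := (V F).
Local Notation cc := (@cc F).
Local Notation mk := (@mk F).

Lemma ccD (x y : V) k : cc (x + y) k = cc x k + cc y k.
Proof. by rewrite /cc mxE. Qed.
Lemma ccZ c (x : V) k : cc (c *: x) k = c * cc x k.
Proof. by rewrite /cc mxE. Qed.
Lemma ccN (x : V) k : cc (- x) k = - cc x k.
Proof. by rewrite /cc mxE. Qed.
Lemma ccB (x y : V) k : cc (x - y) k = cc x k - cc y k.
Proof. by rewrite /cc !mxE. Qed.
Lemma cc0 k : cc 0 k = 0.
Proof. by rewrite /cc mxE. Qed.

Definition ev (x : V) : V := mk (cc x 0) (cc x 1) (cc x 2) (cc x 3) (cc x 4) (cc x 5) 0 0 0 0.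
Definition od (x : V) : V := mk 0 0 0 0 0 0 (cc x 6) (cc x 7) (cc x 8) (cc x 9).

Lemma ev_od (x : V) : x = ev x + od x.
Proof. by rewrite {1}(vecE x) /ev /od mkD; apply: mk_eq; ring. Qed.

Lemma memv_spanl (x : V) (s : seq V) : x \in s -> x \in <<s>>%VS.
Proof. exact: memv_span. Qed.

Lemma span_pred (P : V -> Prop) (s : seq V) :
  P 0 -> (forall x y, P x -> P y -> P (x + y)) -> (forall c x, P x -> P (c *: x)) ->
  (forall g, g \in s -> P g) -> forall x, x \in <<s>>%VS -> P x.
Proof.
move=> P0 PD PZ; elim: s => [|g s IH] Hs x.
  by rewrite span_nil memv0 => /eqP ->.
rewrite span_cons => /memv_addP [y /vlineP [k ->] [z Hz ->]].
apply: PD; first by apply: PZ; apply: Hs; rewrite inE eqxx.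
by apply: IH => // h Hh; apply: Hs; rewrite inE Hh orbT.
Qed.

End Two.


Section Three.
Variable F : fieldType.
Local Notation V := (V F).
Local Notation cc := (@cc F).
Local Notation mk := (@mk F).

Ltac nbv := rewrite /kE /kA /kB /kC1 /kC2 /kF /kP1 /kP2 /kQ1 /kQ2 ?bvE //= ?mkD ?mkN ?mkZ.

Ltac gens := let g := fresh "g" in move=> g; rewrite !inE;
  repeat (case/orP; [move/eqP->; rewrite !mkcE; repeat split; ring | ]);
  move/eqP->; rewrite !mkcE; repeat split; ring.

Ltac spanP := apply: span_pred; [rewrite !cc0; repeat split; ring
  | let x := fresh "x" in let y := fresh "y" in move=> x y; rewrite !ccD;
    repeat (let h := fresh "h" in case=> h; try rewrite h);
    try (let h := fresh "h" in move=> h; rewrite h);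
    repeat (let h := fresh "h" in case=> h; try rewrite h);
    try (let h := fresh "h" in move=> h; rewrite h);
    repeat split; ring
  | let c := fresh "c" in let x := fresh "x" in move=> c x; rewrite !ccZ;
    repeat (let h := fresh "h" in case=> h; try rewrite h);
    try (let h := fresh "h" in move=> h; rewrite h);
    repeat split; ring
  | gens ].


Ltac inspan := repeat first [apply: rpredD | apply: rpredZ | apply: rpredN];
  apply: memv_span; rewrite !inE ?eqxx ?orbT //.

Lemma memEv (x : V) : x \in evenV F <-> (cc x 6 = 0 /\ cc x 7 = 0 /\ cc x 8 = 0 /\ cc x 9 = 0).
Proof.
rewrite /evenV /=; nbv; split; first by move: x; spanP.
move=> [h6 [h7 [h8 h9]]]; rewrite (vecE x) h6 h7 h8 h9.
set l := [:: _; _; _; _; _; _].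
have -> : mk (cc x 0) (cc x 1) (cc x 2) (cc x 3) (cc x 4) (cc x 5) 0 0 0 0 =
  cc x 0 *: mk 1 0 0 0 0 0 0 0 0 0 + cc x 1 *: mk 0 1 0 0 0 0 0 0 0 0 + cc x 2 *: mk 0 0 1 0 0 0 0 0 0 0
  + cc x 3 *: mk 0 0 0 1 0 0 0 0 0 0 + cc x 4 *: mk 0 0 0 0 1 0 0 0 0 0 + cc x 5 *: mk 0 0 0 0 0 1 0 0 0 0.
  by rewrite !mkZ !mkD; apply: mk_eq; ring.
rewrite /l; inspan.
Qed.

Lemma memOd (x : V) : x \in oddV F <-> (cc x 0 = 0 /\ cc x 1 = 0 /\ cc x 2 = 0 /\ cc x 3 = 0 /\ cc x 4 = 0 /\ cc x 5 = 0).
Proof.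
rewrite /oddV /=; nbv; split; first by move: x; spanP.
move=> [h0 [h1 [h2 [h3 [h4 h5]]]]]; rewrite (vecE x) h0 h1 h2 h3 h4 h5.
set l := [:: _; _; _; _].
have -> : mk 0 0 0 0 0 0 (cc x 6) (cc x 7) (cc x 8) (cc x 9) =
  cc x 6 *: mk 0 0 0 0 0 0 1 0 0 0 + cc x 7 *: mk 0 0 0 0 0 0 0 1 0 0 + cc x 8 *: mk 0 0 0 0 0 0 0 0 1 0
  + cc x 9 *: mk 0 0 0 0 0 0 0 0 0 1.
  by rewrite !mkZ !mkD; apply: mk_eq; ring.
rewrite /l; inspan.
Qed.

Lemma memM2 (x : V) : x \in M2 F <-> (cc x 2 = 0 /\ cc x 3 = 0 /\ cc x 4 = 0 /\ cc x 8 = 0 /\ cc x 9 = 0).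
Proof.
rewrite /M2 /=; nbv; split; first by move: x; spanP.
move=> [h2 [h3 [h4 [h8 h9]]]]; rewrite (vecE x) h2 h3 h4 h8 h9.
set l := [:: _; _; _; _; _].
have -> : mk (cc x 0) (cc x 1) 0 0 0 (cc x 5) (cc x 6) (cc x 7) 0 0 =
  cc x 0 *: mk 1 0 0 0 0 0 0 0 0 0 + cc x 5 *: mk 0 0 0 0 0 1 0 0 0 0 + cc x 1 *: mk 0 1 0 0 0 0 0 0 0 0
  + cc x 6 *: mk 0 0 0 0 0 0 1 0 0 0 + cc x 7 *: mk 0 0 0 0 0 0 0 1 0 0.
  by rewrite !mkZ !mkD; apply: mk_eq; ring.
rewrite /l; inspan.
Qed.

Lemma memM3 (x : V) : x \in M3 F <-> (cc x 2 = cc x 1 /\ cc x 4 = 0 /\ cc x 9 = cc x 7).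
Proof.
rewrite /M3 /=; nbv; split; first by move: x; spanP.
move=> [h2 [h4 h9]]; rewrite (vecE x) h2 h4 h9.
set l := [:: _; _; _; _; _; _; _].
have -> : mk (cc x 0) (cc x 1) (cc x 1) (cc x 3) 0 (cc x 5) (cc x 6) (cc x 7) (cc x 8) (cc x 7) =
  cc x 0 *: mk 1 0 0 0 0 0 0 0 0 0 + cc x 5 *: mk 0 0 0 0 0 1 0 0 0 0 + cc x 1 *: mk (0 + 0) (1 + 0) (0 + 1) (0 + 0) (0 + 0) (0 + 0) (0 + 0) (0 + 0) (0 + 0) (0 + 0)
  + cc x 3 *: mk 0 0 0 1 0 0 0 0 0 0 + cc x 6 *: mk 0 0 0 0 0 0 1 0 0 0 + cc x 8 *: mk 0 0 0 0 0 0 0 0 1 0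
  + cc x 7 *: mk (0 + 0) (0 + 0) (0 + 0) (0 + 0) (0 + 0) (0 + 0) (0 + 0) (1 + 0) (0 + 0) (0 + 1).
  by rewrite !mkZ !mkD; apply: mk_eq; ring.
rewrite /l; inspan.
Qed.

Lemma memM4 (x : V) : x \in M4 F <-> (cc x 4 = 0 /\ cc x 7 = 0 /\ cc x 9 = 0).
Proof.
rewrite /M4 /=; nbv; split; first by move: x; spanP.
move=> [h4 [h7 h9]]; rewrite (vecE x) h4 h7 h9.
set l := [:: _; _; _; _; _; _; _].
have -> : mk (cc x 0) (cc x 1) (cc x 2) (cc x 3) 0 (cc x 5) (cc x 6) 0 (cc x 8) 0 =
  cc x 0 *: mk 1 0 0 0 0 0 0 0 0 0 + cc x 5 *: mk 0 0 0 0 0 1 0 0 0 0 + cc x 1 *: mk 0 1 0 0 0 0 0 0 0 0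
  + cc x 2 *: mk 0 0 1 0 0 0 0 0 0 0 + cc x 3 *: mk 0 0 0 1 0 0 0 0 0 0 + cc x 6 *: mk 0 0 0 0 0 0 1 0 0 0
  + cc x 8 *: mk 0 0 0 0 0 0 0 0 1 0.
  by rewrite !mkZ !mkD; apply: mk_eq; ring.
rewrite /l; inspan.
Qed.

End Three.


Section Four.
Variable F : fieldType.
Local Notation V := (V F).
Local Notation cc := (@cc F).
Local Notation mk := (@mk F).

Definition gsub (T : {vspace V}) := (forall x, x \in T -> ev x \in T) /\
  (forall x y, x \in T -> y \in T -> kmul x y \in T).

Lemma ev_in (x : V) : ev x \in evenV F.
Proof. by apply/memEv; rewrite /ev !mkcE. Qed.
Lemma od_in (x : V) : od x \in oddV F.
Proof. by apply/memOd; rewrite /od !mkcE. Qed.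
Lemma even_ev (y : V) : y \in evenV F -> ev y = y.
Proof. by move/memEv=> [h6 [h7 [h8 h9]]]; rewrite {2}(vecE y) /ev h6 h7 h8 h9. Qed.
Lemma odd_ev (y : V) : y \in oddV F -> ev y = 0.
Proof. by move/memOd=> [h0 [h1 [h2 [h3 [h4 h5]]]]]; rewrite /ev h0 h1 h2 h3 h4 h5 mk0. Qed.
Lemma evD (x y : V) : ev (x + y) = ev x + ev y.
Proof. by rewrite /ev !ccD mkD; apply: mk_eq; ring. Qed.
Lemma evZ c (x : V) : ev (c *: x) = c *: ev x.
Proof. by rewrite /ev !ccZ mkZ; apply: mk_eq; ring. Qed.

Lemma subalg_gsub (S : {vspace V}) : is_subalg S -> gsub S.
Proof.
move=> [hS hM]; split => // x xS.
move: xS; rewrite {1}hS => /memv_addP [y /memv_capP [yS yE] [z /memv_capP [zS zO] ->]].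
by rewrite evD even_ev // odd_ev // addr0.
Qed.

Lemma od_ev (x : V) : od x = x - ev x.
Proof. by rewrite {2}(ev_od x) addrC addKr. Qed.

Lemma gsub_od (S : {vspace V}) x : gsub S -> x \in S -> od x \in S.
Proof. by move=> [hE _] xS; rewrite od_ev rpredB // hE. Qed.

Lemma gsub_subalg (S : {vspace V}) : gsub S -> is_subalg S.
Proof.
move=> hS; split; last by case: hS.
apply/eqP; rewrite eqEsubv; apply/andP; split.
  apply/subvP => x xS; rewrite (ev_od x); apply: memv_add; apply/memv_capP; split.
  - by case: hS => h _; apply: h.
  - exact: ev_in.
  - exact: gsub_od.
  - exact: od_in.
by rewrite subv_add !capvSl.
Qed.

Lemma autom_ev (phi : 'End(V)) x : is_autom phi -> ev (phi x) = phi (ev x).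
Proof.
move=> [_ [hE [hO _]]].
have -> : phi x = phi (ev x) + phi (od x) by rewrite -linearD -ev_od.
rewrite evD (even_ev (y := phi (ev x))); last first.
  by apply: (subvP hE); apply: memv_img; apply: ev_in.
rewrite (odd_ev (y := phi (od x))) ?addr0 //.
by apply: (subvP hO); apply: memv_img; apply: od_in.
Qed.

Lemma autom_gsub (phi : 'End(V)) S : is_autom phi -> gsub S -> gsub (phi @: S)%VS.
Proof.
move=> ha [hE hM]; split.
  move=> x /memv_imgP [y yS ->]; rewrite autom_ev //; apply: memv_img; exact: hE.
move=> x y /memv_imgP [x' xS ->] /memv_imgP [y' yS ->].
case: ha => [_ [_ [_ hm]]]; rewrite -hm; apply: memv_img; exact: hM.
Qed.

Lemma autom_proper (phi : 'End(V)) S : is_autom phi -> S != fullv -> (phi @: S)%VS != fullv.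
Proof.
move=> [hk _] hS; apply: contra hS => /eqP h.
have hd : \dim (phi @: S) = \dim S by rewrite limg_dim_eq // hk capv0.
by rewrite eqEdim subvf /= -hd h.
Qed.

Lemma autom_comp (phi psi : 'End(V)) : is_autom phi -> is_autom psi -> is_autom (psi \o phi)%VF.
Proof.
move=> [hk1 [hE1 [hO1 hm1]]] [hk2 [hE2 [hO2 hm2]]]; split.
  apply/eqP/lker0P => x y; rewrite !comp_lfunE => /(lker0P _).
  by rewrite hk2 eqxx => /(_ isT) /(lker0P _); rewrite hk1 eqxx => /(_ isT).
rewrite !limg_comp; split; first exact: subv_trans (limgS _ hE1) hE2.
split; first exact: subv_trans (limgS _ hO1) hO2.
by move=> u v; rewrite !comp_lfunE hm1 hm2.
Qed.

Lemma autom_id : is_autom (\1%VF : 'End(V)).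
Proof.
split; first by apply/eqP/lker0P => x y; rewrite !id_lfunE.
by rewrite !lim1g; split => //; split => // u v; rewrite !id_lfunE.
Qed.

Lemma final_max (S M : {vspace V}) (phi : 'End(V)) : is_maximal_subalg S -> is_autom phi ->
  gsub M -> M != fullv -> (phi @: S <= M)%VS -> (phi @: S)%VS = M.
Proof.
move=> [hS [hSp hmax]] ha hM hMp hsub.
set T := (phi @^-1: M)%VS.
have surj : forall y, exists x, y = phi x.
  move=> y; have : y \in limg phi by move: (ha) => [hk _]; rewrite lker0_limgf ?hk ?memvf.
  by case/memv_imgP => x _ ->; exists x.
have hT : gsub T.
  case: hM => hE hm; split.
    by move=> x; rewrite -!memv_preim -autom_ev //; apply: hE.
  move=> x y; rewrite -!memv_preim; case: ha => [_ [_ [_ hmul]]]; rewrite hmul; exact: hm.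
have hTp : T != fullv.
  apply: contra hMp => /eqP hTf; rewrite eqEsubv subvf /=; apply/subvP => y _.
  case: (surj y) => x ->; rewrite memv_preim -/T hTf; exact: memvf.
have hST : (S <= T)%VS.
  by apply/subvP => x xS; rewrite -memv_preim; apply: (subvP hsub); apply: memv_img.
have eT := hmax T (gsub_subalg hT) hTp hST.
apply/eqP; rewrite eqEsubv hsub /=; apply/subvP => y yM.
case: (surj y) => x Hx; rewrite Hx; apply: memv_img; rewrite -eT /T -memv_preim -Hx //.
Qed.

End Four.


Section Five.
Variable F : fieldType.
Local Notation V := (V F).
Local Notation cc := (@cc F).
Local Notation mk := (@mk F).

Definition linmap (r : nat -> V) : 'End(V) := linfun (mulmxr (\matrix_(i < 10) r i)).

Lemma linmapE r (x : V) : linmap r x =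
  cc x 0 *: r 0%N + cc x 1 *: r 1%N + cc x 2 *: r 2%N + cc x 3 *: r 3%N + cc x 4 *: r 4%N +
  cc x 5 *: r 5%N + cc x 6 *: r 6%N + cc x 7 *: r 7%N + cc x 8 *: r 8%N + cc x 9 *: r 9%N.
Proof.
rewrite lfunE /= mulmx_sum_row sum10 !rowK !inordK //.
Qed.

Definition Aut (f : V -> V) : 'End(V) := linmap (fun k => f (bv F k)).

Lemma autom_of (f g : V -> V) :
  (forall x, Aut f x = f x) -> (forall x, g (f x) = x) ->
  (forall x, x \in evenV F -> f x \in evenV F) ->
  (forall x, x \in oddV F -> f x \in oddV F) ->
  (forall x y, f (kmul x y) = kmul (f x) (f y)) -> is_autom (Aut f).
Proof.
move=> hA hg hE hO hm; split.
  by apply/eqP/lker0P => x y; rewrite !hA => /(congr1 g); rewrite !hg.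
split; first by apply/subvP => y /memv_imgP [x xE ->]; rewrite hA; apply: hE.
split; first by apply/subvP => y /memv_imgP [x xE ->]; rewrite hA; apply: hO.
by move=> u v; rewrite !hA.
Qed.

Definition fLU (s : F) (x : V) : V := mk (cc x 0) (cc x 1 - s * cc x 4) (cc x 2 - s * cc x 4)
  (cc x 3 + 2%:R * s * cc x 1 - 2%:R * s * cc x 2) (cc x 4) (cc x 5)
  (cc x 6 + s * cc x 7 - s * cc x 9) (cc x 7) (cc x 8 + s * cc x 7 - s * cc x 9) (cc x 9).

Definition fRU (s : F) (x : V) : V := mk (cc x 0) (cc x 1 + s * cc x 3) (cc x 2 - s * cc x 3)
  (cc x 3) (cc x 4 - 2%:R * s * cc x 1 - 2%:R * s * cc x 2) (cc x 5)
  (cc x 6) (cc x 7 + s * cc x 6 + s * cc x 8) (cc x 8) (cc x 9 - s * cc x 6 - s * cc x 8).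

Definition fLW (s : F) (x : V) : V := mk (cc x 0) (cc x 1 + s * cc x 4) (cc x 2 - s * cc x 4)
  (cc x 3 - 2%:R * s * cc x 1 - 2%:R * s * cc x 2) (cc x 4) (cc x 5)
  (cc x 6 + s * cc x 7 + s * cc x 9) (cc x 7) (cc x 8 - s * cc x 7 - s * cc x 9) (cc x 9).

Definition fRW (s : F) (x : V) : V := mk (cc x 0) (cc x 1 - s * cc x 3) (cc x 2 - s * cc x 3)
  (cc x 3) (cc x 4 + 2%:R * s * cc x 1 - 2%:R * s * cc x 2) (cc x 5)
  (cc x 6) (cc x 7 + s * cc x 6 - s * cc x 8) (cc x 8) (cc x 9 + s * cc x 6 - s * cc x 8).

Definition fSG (x : V) : V := mk (cc x 0) (cc x 1) (- cc x 2) (- cc x 3) (- cc x 4) (cc x 5)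
  (cc x 6) (cc x 7) (- cc x 8) (- cc x 9).

Lemma fLU_mk s a0 a1 a2 a3 a4 a5 a6 a7 a8 a9 : fLU s (mk a0 a1 a2 a3 a4 a5 a6 a7 a8 a9) = mk (a0) (a1 - s * a4) (a2 - s * a4)
  (a3 + 2%:R * s * a1 - 2%:R * s * a2) (a4) (a5)
  (a6 + s * a7 - s * a9) (a7) (a8 + s * a7 - s * a9) (a9).
Proof. by rewrite /fLU !mkcE. Qed.
Lemma fRU_mk s a0 a1 a2 a3 a4 a5 a6 a7 a8 a9 : fRU s (mk a0 a1 a2 a3 a4 a5 a6 a7 a8 a9) = mk (a0) (a1 + s * a3) (a2 - s * a3)
  (a3) (a4 - 2%:R * s * a1 - 2%:R * s * a2) (a5)
  (a6) (a7 + s * a6 + s * a8) (a8) (a9 - s * a6 - s * a8).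
Proof. by rewrite /fRU !mkcE. Qed.
Lemma fLW_mk s a0 a1 a2 a3 a4 a5 a6 a7 a8 a9 : fLW s (mk a0 a1 a2 a3 a4 a5 a6 a7 a8 a9) = mk (a0) (a1 + s * a4) (a2 - s * a4)
  (a3 - 2%:R * s * a1 - 2%:R * s * a2) (a4) (a5)
  (a6 + s * a7 + s * a9) (a7) (a8 - s * a7 - s * a9) (a9).
Proof. by rewrite /fLW !mkcE. Qed.
Lemma fRW_mk s a0 a1 a2 a3 a4 a5 a6 a7 a8 a9 : fRW s (mk a0 a1 a2 a3 a4 a5 a6 a7 a8 a9) = mk (a0) (a1 - s * a3) (a2 - s * a3)
  (a3) (a4 + 2%:R * s * a1 - 2%:R * s * a2) (a5)
  (a6) (a7 + s * a6 - s * a8) (a8) (a9 + s * a6 - s * a8).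
Proof. by rewrite /fRW !mkcE. Qed.
Lemma fSG_mk a0 a1 a2 a3 a4 a5 a6 a7 a8 a9 : fSG (mk a0 a1 a2 a3 a4 a5 a6 a7 a8 a9) = mk (a0) (a1) (- a2) (- a3) (- a4) (a5)
  (a6) (a7) (- a8) (- a9).
Proof. by rewrite /fSG !mkcE. Qed.

Ltac autE := let x := fresh "x" in move=> x; rewrite linmapE; rewrite ?bvE //=; rewrite /fLU /fRU /fLW /fRW /fSG;
  rewrite !mkcE !mkZ !mkD; apply: mk_eq; ring.
Ltac autM := let x := fresh "x" in let y := fresh "y" in move=> x y; rewrite (vecE x) (vecE y) kmul_mk ?fLU_mk ?fRU_mk ?fLW_mk ?fRW_mk ?fSG_mk kmul_mk; apply: mk_eq; ring.
Ltac autI := let x := fresh "x" in move=> x; rewrite /fLU /fRU /fLW /fRW /fSG !mkcE; symmetry; rewrite {1}(vecE x); apply: mk_eq; ring.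
Ltac autEv := let x := fresh "x" in let h6 := fresh in let h7 := fresh in let h8 := fresh in let h9 := fresh in move=> x /memEv [h6 [h7 [h8 h9]]]; apply/memEv;
  rewrite /fLU /fRU /fLW /fRW /fSG !mkcE h6 h7 h8 h9; repeat split; ring.
Ltac autOd := let x := fresh "x" in let h0 := fresh in let h1 := fresh in let h2 := fresh in let h3 := fresh in let h4 := fresh in let h5 := fresh in move=> x /memOd [h0 [h1 [h2 [h3 [h4 h5]]]]]; apply/memOd;
  rewrite /fLU /fRU /fLW /fRW /fSG !mkcE h0 h1 h2 h3 h4 h5; repeat split; ring.

Lemma autom_LU s : is_autom (Aut (fLU s)).
Proof. apply: (@autom_of _ (fLU (- s))); [autE | autI | autEv | autOd | autM]. Qed.
Lemma autom_RU s : is_autom (Aut (fRU s)).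
Proof. apply: (@autom_of _ (fRU (- s))); [autE | autI | autEv | autOd | autM]. Qed.
Lemma autom_LW s : is_autom (Aut (fLW s)).
Proof. apply: (@autom_of _ (fLW (- s))); [autE | autI | autEv | autOd | autM]. Qed.
Lemma autom_RW s : is_autom (Aut (fRW s)).
Proof. apply: (@autom_of _ (fRW (- s))); [autE | autI | autEv | autOd | autM]. Qed.
Lemma autom_SG : is_autom (Aut fSG).
Proof. apply: (@autom_of _ fSG); [autE | autI | autEv | autOd | autM]. Qed.

Lemma LU_E s x : Aut (fLU s) x = fLU s x. Proof. move: x; autE. Qed.
Lemma RU_E s x : Aut (fRU s) x = fRU s x. Proof. move: x; autE. Qed.
Lemma LW_E s x : Aut (fLW s) x = fLW s x. Proof. move: x; autE. Qed.
Lemma RW_E s x : Aut (fRW s) x = fRW s x. Proof. move: x; autE. Qed.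
Lemma SG_E x : Aut fSG x = fSG x. Proof. move: x; autE. Qed.

End Five.


Section Six.
Variable F : fieldType.
Hypothesis n2 : (2%:R : F) != 0.
Hypothesis n3 : (3%:R : F) != 0.
Local Notation V := (V F).
Local Notation cc := (@cc F).
Local Notation mk := (@mk F).

Definition vE : V := mk 1 0 0 0 0 0 0 0 0 0.
Definition vA : V := mk 0 1 0 0 0 0 0 0 0 0.
Definition vB : V := mk 0 0 1 0 0 0 0 0 0 0.
Definition vC1 : V := mk 0 0 0 1 0 0 0 0 0 0.
Definition vC2 : V := mk 0 0 0 0 1 0 0 0 0 0.
Definition vF : V := mk 0 0 0 0 0 1 0 0 0 0.
Definition vP1 : V := mk 0 0 0 0 0 0 1 0 0 0.
Definition vP2 : V := mk 0 0 0 0 0 0 0 1 0 0.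
Definition vQ1 : V := mk 0 0 0 0 0 0 0 0 1 0.
Definition vQ2 : V := mk 0 0 0 0 0 0 0 0 0 1.
Definition uv (a b : F) : V := mk 0 0 0 0 0 0 a b a (- b).
Definition wv (c d : F) : V := mk 0 0 0 0 0 0 c d (- c) d.

Ltac unf := rewrite /vE /vA /vB /vC1 /vC2 /vF /vP1 /vP2 /vQ1 /vQ2 /uv /wv /ev /od.
Ltac vsolve := unf; rewrite ?(mkZ, mkD, mkN, kmul_mk) /Defs.half; apply: mk_eq; field; rewrite ?n2 ?n3 //; try assumption.

Lemma all_in (T : {vspace V}) : vE \in T -> vA \in T -> vB \in T -> vC1 \in T -> vC2 \in T ->
  vF \in T -> vP1 \in T -> vP2 \in T -> vQ1 \in T -> vQ2 \in T -> T = fullv.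
Proof using n2 n3.
move=> h0 h1 h2 h3 h4 h5 h6 h7 h8 h9; apply/eqP; rewrite eqEsubv subvf /=.
apply/subvP => y _; rewrite (vecE y).
have -> : mk (cc y 0) (cc y 1) (cc y 2) (cc y 3) (cc y 4) (cc y 5) (cc y 6) (cc y 7) (cc y 8) (cc y 9) =
  cc y 0 *: vE + cc y 1 *: vA + cc y 2 *: vB + cc y 3 *: vC1 + cc y 4 *: vC2 + cc y 5 *: vF
  + cc y 6 *: vP1 + cc y 7 *: vP2 + cc y 8 *: vQ1 + cc y 9 *: vQ2 by vsolve.
by repeat apply: rpredD; apply: rpredZ.
Qed.

Lemma L_full (T : {vspace V}) : gsub T -> T != fullv ->
  vP1 \in T -> vP2 \in T -> vQ1 \in T -> vQ2 \in T -> False.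
Proof using n2 n3.
move=> [hE hM] hp h6 h7 h8 h9; move/negP: hp; apply.
have hC1 : vC1 \in T.
  have -> : vC1 = 2%:R^-1 *: kmul vP1 vQ1 by vsolve.
  by apply: rpredZ; apply: (hM).
have hB : vB \in T.
  have -> : vB = kmul vP1 vQ2 by vsolve.
  by apply: (hM).
have hC2 : vC2 \in T.
  have -> : vC2 = - 2%:R^-1 *: kmul vP2 vQ2 by vsolve.
  by apply: rpredZ; apply: (hM).
have hA : vA \in T.
  have -> : vA = 2%:R^-1 *: (kmul vP1 vP2 + kmul vQ1 vQ2) by vsolve.
  by apply: rpredZ; apply: rpredD; apply: (hM).
have hE0 : vE \in T.
  have -> : vE = 2%:R^-1 *: kmul vC1 vC2 by vsolve.
  by apply: rpredZ; apply: (hM).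
have hF : vF \in T.
  have -> : vF = 3%:R^-1 *: (vE - (2%:R^-1 * 2%:R^-1) *: (kmul vP1 vP2 - kmul vQ1 vQ2)) by vsolve.
  by apply: rpredZ; apply: rpredB => //; apply: rpredZ; apply: rpredB; apply: (hM).
by apply/eqP; apply: all_in.
Qed.


Lemma L_full' (T : {vspace V}) : gsub T -> T != fullv ->
  uv 1 0 \in T -> uv 0 1 \in T -> wv 1 0 \in T -> wv 0 1 \in T -> False.
Proof using n2 n3.
move=> hT hp h1 h2 h3 h4; apply: (L_full hT hp).
- have -> : vP1 = 2%:R^-1 *: (uv 1 0 + wv 1 0) by vsolve.
  by apply: rpredZ; apply: rpredD.
- have -> : vP2 = 2%:R^-1 *: (uv 0 1 + wv 0 1) by vsolve.
  by apply: rpredZ; apply: rpredD.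
- have -> : vQ1 = 2%:R^-1 *: (uv 1 0 - wv 1 0) by vsolve.
  by apply: rpredZ; apply: rpredB.
- have -> : vQ2 = 2%:R^-1 *: (wv 0 1 - uv 0 1) by vsolve.
  by apply: rpredZ; apply: rpredB.
Qed.

Lemma scal_in (T : {vspace V}) (g : V) k : k *: g \in T -> k != 0 -> g \in T.
Proof. by move=> h hk; rewrite -[g](scale1r) -(mulVf hk) -scalerA rpredZ. Qed.

Lemma sub0 (a b : F) : a - b = 0 -> b = a.
Proof. by move/eqP; rewrite subr_eq0 => /eqP ->. Qed.

Lemma mul2_0 (a : F) : 2%:R * a = 0 -> a = 0.
Proof. by move/eqP; rewrite mulf_eq0 (negbTE n2) => /eqP. Qed.

Lemma L_M3 (T : {vspace V}) : gsub T -> T != fullv ->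
  uv 1 0 \in T -> wv 1 0 \in T -> wv 0 1 \in T -> forall x, x \in T -> x \in M3 F.
Proof using n2 n3.
move=> hT hp h1 h3 h4; case: (hT) => hE hM.
have nU2 : forall k, k *: uv 0 1 \in T -> k = 0.
  move=> k hk; case: (eqVneq k 0) => // nk; exfalso.
  by apply: (L_full' hT hp h1 (scal_in hk nk) h3 h4).
move=> x xT; apply/memM3.
have hev := hE _ xT; have hod := gsub_od hT xT.
split; last split.
- apply: sub0; apply: nU2.
  have -> : (cc x 1 - cc x 2) *: uv 0 1 = kmul (ev x) (wv 0 1) - (2%:R^-1 * (cc x 0 + cc x 5)) *: wv 0 1
     - cc x 3 *: uv 1 0 by vsolve.
  by repeat apply: rpredB; rewrite ?rpredZ //; apply: (hM).
- apply: oppr_inj; rewrite oppr0; apply: nU2.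
  have -> : (- cc x 4) *: uv 0 1 = kmul (ev x) (wv 1 0) - (2%:R^-1 * (cc x 0 + cc x 5)) *: wv 1 0
     - (cc x 1 + cc x 2) *: uv 1 0 by vsolve.
  by repeat apply: rpredB; rewrite ?rpredZ //; apply: (hM).
- apply: sub0; apply: nU2.
  have -> : (cc x 7 - cc x 9) *: uv 0 1 = 2%:R *: od x - (cc x 6 + cc x 8) *: uv 1 0
     - (cc x 6 - cc x 8) *: wv 1 0 - (cc x 7 + cc x 9) *: wv 0 1 by vsolve.
  by repeat apply: rpredB; rewrite ?rpredZ.
Qed.

Lemma L_U0 (T : {vspace V}) : gsub T -> T != fullv ->
  uv 1 0 \in T -> uv 0 1 \in T -> (forall c d, wv c d \in T -> c = 0 /\ d = 0) ->
  forall x, x \in T -> cc x 2 = - cc x 1 /\ cc x 4 = 0 /\ cc x 9 = - cc x 7.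
Proof using n2 n3.
move=> hT hp h1 h2 hW; case: (hT) => hE hM x xT.
have hev := hE _ xT; have hod := gsub_od hT xT.
split; last split.
- have : wv (- cc x 3) (cc x 1 + cc x 2) \in T.
    have -> : wv (- cc x 3) (cc x 1 + cc x 2) = kmul (ev x) (uv 0 1)
      - (2%:R^-1 * (cc x 0 + cc x 5)) *: uv 0 1 by vsolve.
    by apply: rpredB; rewrite ?rpredZ //; apply: (hM).
  move/hW => [_ h]; apply/eqP; by rewrite -addr_eq0 addrC h.
- have : wv (cc x 1 - cc x 2) (cc x 4) \in T.
    have -> : wv (cc x 1 - cc x 2) (cc x 4) = kmul (ev x) (uv 1 0)
      - (2%:R^-1 * (cc x 0 + cc x 5)) *: uv 1 0 by vsolve.
    by apply: rpredB; rewrite ?rpredZ //; apply: (hM).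
  by move/hW => [_ h].
- have : wv (cc x 6 - cc x 8) (cc x 7 + cc x 9) \in T.
    have -> : wv (cc x 6 - cc x 8) (cc x 7 + cc x 9) = 2%:R *: od x - (cc x 6 + cc x 8) *: uv 1 0
      - (cc x 7 - cc x 9) *: uv 0 1 by vsolve.
    by repeat apply: rpredB; rewrite ?rpredZ.
  move/hW => [_ h]; apply/eqP; by rewrite -addr_eq0 addrC h.
Qed.


Lemma sq0 (a : F) : a * a = 0 -> a = 0.
Proof. by move/eqP; rewrite mulf_eq0 orbb => /eqP. Qed.

Lemma sum_diff0 (a b : F) : a - b = 0 -> a + b = 0 -> a = 0 /\ b = 0.
Proof using n2 n3.
move=> h1 h2; have eb := sub0 h1; subst b.
have : 2%:R * a = 0 by rewrite -h2; ring.
by move/mul2_0 => ->.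
Qed.

Lemma L_M4 (T : {vspace V}) : gsub T -> T != fullv ->
  uv 1 0 \in T -> wv 1 0 \in T -> (forall a b, uv a b \in T -> b = 0) ->
  (forall c d, wv c d \in T -> d = 0) -> forall x, x \in T -> x \in M4 F.
Proof using n2 n3.
move=> hT hp h1 h3 hU hW; case: (hT) => hE hM x xT; apply/memM4.
have hev := hE _ xT; have hod := gsub_od hT xT.
have hy : uv 0 (cc x 7 - cc x 9) + wv 0 (cc x 7 + cc x 9) \in T.
  have -> : uv 0 (cc x 7 - cc x 9) + wv 0 (cc x 7 + cc x 9) =
    2%:R *: od x - (cc x 6 + cc x 8) *: uv 1 0 - (cc x 6 - cc x 8) *: wv 1 0 by vsolve.
  by repeat apply: rpredB; rewrite ?rpredZ.
have hb : cc x 7 - cc x 9 = 0.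
  apply: sq0; apply: (hU 0).
  have -> : uv 0 ((cc x 7 - cc x 9) * (cc x 7 - cc x 9)) = - (2%:R^-1 * 2%:R^-1) *:
    kmul (kmul (uv 1 0) (uv 0 (cc x 7 - cc x 9) + wv 0 (cc x 7 + cc x 9)))
         (uv 0 (cc x 7 - cc x 9) + wv 0 (cc x 7 + cc x 9)) by vsolve.
  by apply: rpredZ; apply: (hM) => //; apply: (hM).
have hd : cc x 7 + cc x 9 = 0.
  apply: (hW 0); move: hy; rewrite hb.
  by rewrite (_ : uv 0 0 = 0) ?add0r //; unf; rewrite mk0 oppr0.
have [h7 h9] := sum_diff0 hb hd.
split; last by split.
have : wv (cc x 1 - cc x 2) (cc x 4) \in T.
  have -> : wv (cc x 1 - cc x 2) (cc x 4) = kmul (ev x) (uv 1 0)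
      - (2%:R^-1 * (cc x 0 + cc x 5)) *: uv 1 0 by vsolve.
  by apply: rpredB; rewrite ?rpredZ //; apply: (hM).
exact: hW.
Qed.

Lemma L_M3b (T : {vspace V}) : gsub T -> T != fullv ->
  uv 1 0 \in T -> (forall a b, uv a b \in T -> b = 0) ->
  (forall c d, wv c d \in T -> c = 0 /\ d = 0) -> forall x, x \in T -> x \in M3 F.
Proof using n2 n3.
move=> hT hp h1 hU hW; case: (hT) => hE hM x xT; apply/memM3.
have hev := hE _ xT; have hod := gsub_od hT xT.
have hy : uv 0 (cc x 7 - cc x 9) + wv (cc x 6 - cc x 8) (cc x 7 + cc x 9) \in T.
  have -> : uv 0 (cc x 7 - cc x 9) + wv (cc x 6 - cc x 8) (cc x 7 + cc x 9) =
    2%:R *: od x - (cc x 6 + cc x 8) *: uv 1 0 by vsolve.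
  by repeat apply: rpredB; rewrite ?rpredZ.
have hb : cc x 7 - cc x 9 = 0.
  have : wv ((cc x 7 - cc x 9) * (cc x 6 - cc x 8)) ((cc x 7 - cc x 9) * (cc x 7 + cc x 9)) \in T.
    have -> : wv ((cc x 7 - cc x 9) * (cc x 6 - cc x 8)) ((cc x 7 - cc x 9) * (cc x 7 + cc x 9)) =
      (2%:R^-1 * 2%:R^-1) *: (kmul (kmul (uv 1 0) (uv 0 (cc x 7 - cc x 9) + wv (cc x 6 - cc x 8) (cc x 7 + cc x 9)))
         (uv 0 (cc x 7 - cc x 9) + wv (cc x 6 - cc x 8) (cc x 7 + cc x 9)) +
         (2%:R * 2%:R * (cc x 7 - cc x 9)) *: (uv 0 (cc x 7 - cc x 9) + wv (cc x 6 - cc x 8) (cc x 7 + cc x 9))) by vsolve.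
    by apply: rpredZ; apply: rpredD; [apply: (hM) => //; apply: (hM) | apply: rpredZ].
  move/hW => [/eqP e1 /eqP e2]; case: (eqVneq (cc x 7 - cc x 9) 0) => // nb.
  move: e1 e2; rewrite !mulf_eq0 (negbTE nb) /= => /eqP c0 /eqP d0.
  apply: (hU 0).
  have -> : uv 0 (cc x 7 - cc x 9) = 2%:R *: od x - (cc x 6 + cc x 8) *: uv 1 0
     - (cc x 6 - cc x 8) *: wv 1 0 - (cc x 7 + cc x 9) *: wv 0 1 by vsolve.
  by rewrite c0 d0 !scale0r !subr0; apply: rpredB; rewrite ?rpredZ.
split; last split.
- have : wv (cc x 1 - cc x 2) (cc x 4) \in T.
    have -> : wv (cc x 1 - cc x 2) (cc x 4) = kmul (ev x) (uv 1 0)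
        - (2%:R^-1 * (cc x 0 + cc x 5)) *: uv 1 0 by vsolve.
    by apply: rpredB; rewrite ?rpredZ //; apply: (hM).
  by move/hW => [h _]; apply: sub0.
- have : wv (cc x 1 - cc x 2) (cc x 4) \in T.
    have -> : wv (cc x 1 - cc x 2) (cc x 4) = kmul (ev x) (uv 1 0)
        - (2%:R^-1 * (cc x 0 + cc x 5)) *: uv 1 0 by vsolve.
    by apply: rpredB; rewrite ?rpredZ //; apply: (hM).
  by move/hW => [_ h].
- by apply: sub0.
Qed.

Lemma L_M4b (T : {vspace V}) : gsub T -> vP1 \in T ->
  (forall y, y \in T -> cc y 7 = 0 /\ cc y 8 = 0 /\ cc y 9 = 0) -> forall x, x \in T -> x \in M4 F.
Proof using n2 n3.
move=> hT hP hO; case: (hT) => hE hM x xT; apply/memM4.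
have [h7 [_ h9]] := hO _ xT.
have [_ [_ h]] := hO _ (hM _ _ (hE _ xT) hP).
split => //; rewrite -h /ev /vP1 kmul_mk mkcE; ring.
Qed.

Lemma L_d1 (T : {vspace V}) : gsub T -> vP1 \in T ->
  (forall c d, wv c d \in T -> c = 0 /\ d = 0) ->
  forall g d, uv 0 1 + wv g d \in T -> d = 1.
Proof using n2 n3.
move=> hT hP hW g d hy; case: (hT) => hE hM.
have : wv (d - 1) 0 \in T.
  have -> : wv (d - 1) 0 = - (2%:R^-1 * 2%:R^-1) *: kmul (kmul (2%:R *: vP1) (uv 0 1 + wv g d)) (2%:R *: vP1)
     - 2%:R *: vP1 by vsolve.
  apply: rpredB; rewrite ?rpredZ //; apply: (hM); rewrite ?rpredZ //; apply: (hM); rewrite ?rpredZ //.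
by move/hW => [h _]; apply/esym/sub0.
Qed.

Lemma L_B (T : {vspace V}) : gsub T -> vP1 \in T ->
  (forall c d, wv c d \in T -> c = 0 /\ d = 0) ->
  forall x, x \in T -> ~ (cc x 7 = 0 /\ cc x 8 = 0 /\ cc x 9 = 0) ->
  exists g, uv 0 1 + wv g 1 \in T.
Proof using n2 n3.
move=> hT hP hW x xT hx; case: (hT) => hE hM.
have hod := gsub_od hT xT.
have hz : uv 0 (cc x 7 - cc x 9) + wv (- (2%:R * cc x 8)) (cc x 7 + cc x 9) \in T.
  have -> : uv 0 (cc x 7 - cc x 9) + wv (- (2%:R * cc x 8)) (cc x 7 + cc x 9) =
    2%:R *: od x - (cc x 6 + cc x 8) *: (2%:R *: vP1) by vsolve.
  by apply: rpredB; rewrite ?rpredZ.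
case: (eqVneq (cc x 7 - cc x 9) 0) => hb.
  exfalso; apply: hx.
  move: hz; rewrite hb (_ : uv 0 0 = 0) ?add0r; last by unf; rewrite mk0 oppr0.
  move/hW => [h8 hd]; have [h7 h9] := sum_diff0 hb hd.
  by split => //; split => //; apply: mul2_0; apply: oppr_inj; rewrite oppr0.
exists ((- (2%:R * cc x 8)) / (cc x 7 - cc x 9)).
have hy : uv 0 1 + wv ((- (2%:R * cc x 8)) / (cc x 7 - cc x 9)) ((cc x 7 + cc x 9) / (cc x 7 - cc x 9)) \in T.
  have -> : uv 0 1 + wv ((- (2%:R * cc x 8)) / (cc x 7 - cc x 9)) ((cc x 7 + cc x 9) / (cc x 7 - cc x 9)) =
    (cc x 7 - cc x 9)^-1 *: (uv 0 (cc x 7 - cc x 9) + wv (- (2%:R * cc x 8)) (cc x 7 + cc x 9)) by vsolve.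
  by rewrite rpredZ.
by move: (hy); rewrite (L_d1 hT hP hW hy).
Qed.

Lemma L_M2 (T : {vspace V}) : gsub T -> vP1 \in T -> vP2 \in T ->
  (forall c d, wv c d \in T -> c = 0 /\ d = 0) -> forall x, x \in T -> x \in M2 F.
Proof using n2 n3.
move=> hT hP1 hP2 hW; case: (hT) => hE hM.
have hO : forall y, y \in T -> cc y 8 = 0 /\ cc y 9 = 0.
  move=> y yT; have hod := gsub_od hT yT.
  have : wv (cc y 8) (- cc y 9) \in T.
    have -> : wv (cc y 8) (- cc y 9) = - 2%:R^-1 *: (2%:R *: od y - (cc y 6 + cc y 8) *: (2%:R *: vP1)
       - (cc y 7 - cc y 9) *: (2%:R *: vP2)) by vsolve.
    by rewrite rpredZ // !rpredB ?rpredZ.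
  by move/hW => [-> /eqP]; rewrite oppr_eq0 => /eqP.
move=> x xT; apply/memM2.
have [h8 h9] := hO _ xT.
have [e2 e4] := hO _ (hM _ _ (hE _ xT) hP1).
have [e3 _] := hO _ (hM _ _ (hE _ xT) hP2).
move: e2 e4 e3; rewrite /ev /vP1 /vP2 !kmul_mk !mkcE => e2 e4 e3.
split; [|split; [|split]] => //.
- by rewrite -e2; ring.
- by rewrite -e3; ring.
- by rewrite -e4; ring.
Qed.

End Six.


Section Seven.
Variable F : fieldType.
Hypothesis n2 : (2%:R : F) != 0.
Hypothesis n3 : (3%:R : F) != 0.
Local Notation V := (V F).
Local Notation cc := (@cc F).
Local Notation mk := (@mk F).
Local Notation uv := (@uv F).
Local Notation wv := (@wv F).

Ltac unf7 := rewrite /vE /vA /vB /vC1 /vC2 /vF /vP1 /vP2 /vQ1 /vQ2 /uv /wv /ev /od.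
Ltac vsolve7 := unf7; rewrite ?(mkZ, mkD, mkN, kmul_mk, fLU_mk, fRU_mk, fLW_mk, fRW_mk, fSG_mk) /Defs.half; apply: mk_eq; field; rewrite ?n2 ?n3 //; try assumption.

Definition fixU (phi : 'End(V)) := forall a b, phi (uv a b) = uv a b.
Definition fixW (phi : 'End(V)) := forall c d, phi (wv c d) = wv c d.
Definition presU (phi : 'End(V)) := forall a b, exists a' b', phi (uv a' b') = uv a b.
Definition presW (phi : 'End(V)) := forall c d, exists c' d', phi (wv c' d') = wv c d.
Definition NP (T : {vspace V}) := (forall a b, uv a b \in T -> a = 0 /\ b = 0) /\
  (forall c d, wv c d \in T -> c = 0 /\ d = 0).
Definition Goal (T : {vspace V}) := exists psi : 'End(V), is_autom psi /\
  [\/ (psi @: T <= M1 F)%VS, (psi @: T <= M2 F)%VS, (psi @: T <= M3 F)%VS | (psi @: T <= M4 F)%VS].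

Lemma fix_pres_U phi : fixU phi -> presU phi.
Proof. by move=> h a b; exists a, b. Qed.
Lemma fix_pres_W phi : fixW phi -> presW phi.
Proof. by move=> h a b; exists a, b. Qed.

Lemma autom_inj (phi : 'End(V)) : is_autom phi -> injective phi.
Proof. by move=> [hk _]; apply/lker0P; rewrite hk. Qed.

Lemma goal_comp (phi : 'End(V)) T : is_autom phi -> Goal (phi @: T)%VS -> Goal T.
Proof.
move=> ha [psi [hp hc]]; exists (psi \o phi)%VF; split; first exact: autom_comp.
by rewrite limg_comp.
Qed.

Lemma goal_id T : [\/ (T <= M1 F)%VS, (T <= M2 F)%VS, (T <= M3 F)%VS | (T <= M4 F)%VS] -> Goal T.
Proof. by move=> h; exists \1%VF; split; [exact: autom_id | rewrite lim1g]. Qed.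

Lemma fixU_in (phi : 'End(V)) T a b : is_autom phi -> fixU phi -> uv a b \in (phi @: T)%VS -> uv a b \in T.
Proof.
move=> ha hf /memv_imgP [s sT e]; move: e; rewrite -{1}hf => /(autom_inj ha) ->; exact: sT.
Qed.

Lemma NP_img (phi : 'End(V)) T : is_autom phi -> presU phi -> presW phi -> NP T -> NP (phi @: T)%VS.
Proof.
move=> ha hU hW [nU nW]; split.
  move=> a b /memv_imgP [s sT e]; have [a' [b' e']] := hU a b.
  move: e; rewrite -e' => /(autom_inj ha) es; rewrite -es in sT.
  have [ha' hb'] := nU _ _ sT; move: e'; rewrite ha' hb' (_ : uv 0 0 = 0) ?linear0; last by unf7; rewrite mk0 oppr0.
  move/(congr1 (fun v => (cc v 6, cc v 7))); rewrite /uv !mkcE !cc0 /=; by case=> <- <-.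
move=> c d /memv_imgP [s sT e]; have [c' [d' e']] := hW c d.
move: e; rewrite -e' => /(autom_inj ha) es; rewrite -es in sT.
have [ha' hb'] := nW _ _ sT; move: e'; rewrite ha' hb' (_ : wv 0 0 = 0) ?linear0; last by unf7; rewrite mk0 oppr0.
move/(congr1 (fun v => (cc v 6, cc v 7))); rewrite /wv !mkcE !cc0 /=; by case=> <- <-.
Qed.

Lemma LU_uv s a b : Aut (fLU s) (uv a b) = uv (a + 2%:R * s * b) b.
Proof. by rewrite LU_E; vsolve7. Qed.
Lemma LU_fixW s : fixW (Aut (fLU s)).
Proof. by move=> c d; rewrite LU_E; vsolve7. Qed.
Lemma RU_uv s a b : Aut (fRU s) (uv a b) = uv a (b + 2%:R * s * a).
Proof. by rewrite RU_E; vsolve7. Qed.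
Lemma RU_fixW s : fixW (Aut (fRU s)).
Proof. by move=> c d; rewrite RU_E; vsolve7. Qed.
Lemma LW_wv s c d : Aut (fLW s) (wv c d) = wv (c + 2%:R * s * d) d.
Proof. by rewrite LW_E; vsolve7. Qed.
Lemma LW_fixU s : fixU (Aut (fLW s)).
Proof. by move=> a b; rewrite LW_E; vsolve7. Qed.
Lemma RW_wv s c d : Aut (fRW s) (wv c d) = wv c (d + 2%:R * s * c).
Proof. by rewrite RW_E; vsolve7. Qed.
Lemma RW_fixU s : fixU (Aut (fRW s)).
Proof. by move=> a b; rewrite RW_E; vsolve7. Qed.
Lemma SG_uv a b : Aut (@fSG F) (uv a b) = wv a b.
Proof. by rewrite SG_E; vsolve7. Qed.
Lemma SG_wv c d : Aut (@fSG F) (wv c d) = uv c d.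
Proof. by rewrite SG_E; vsolve7. Qed.

Lemma LU_presU s : presU (Aut (fLU s)).
Proof. by move=> a b; exists (a - 2%:R * s * b), b; rewrite LU_uv; congr uv; ring. Qed.
Lemma RU_presU s : presU (Aut (fRU s)).
Proof. by move=> a b; exists a, (b - 2%:R * s * a); rewrite RU_uv; congr uv; ring. Qed.
Lemma LW_presW s : presW (Aut (fLW s)).
Proof. by move=> c d; exists (c - 2%:R * s * d), d; rewrite LW_wv; congr wv; ring. Qed.
Lemma RW_presW s : presW (Aut (fRW s)).
Proof. by move=> c d; exists c, (d - 2%:R * s * c); rewrite RW_wv; congr wv; ring. Qed.

Lemma fixW_comp (phi psi : 'End(V)) : fixW phi -> fixW psi -> fixW (psi \o phi)%VF.
Proof. by move=> h1 h2 c d; rewrite comp_lfunE h1 h2. Qed.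
Lemma fixU_comp (phi psi : 'End(V)) : fixU phi -> fixU psi -> fixU (psi \o phi)%VF.
Proof. by move=> h1 h2 c d; rewrite comp_lfunE h1 h2. Qed.
Lemma presU_comp (phi psi : 'End(V)) : presU phi -> presU psi -> presU (psi \o phi)%VF.
Proof.
move=> h1 h2 a b; have [a1 [b1 e1]] := h2 a b; have [a2 [b2 e2]] := h1 a1 b1.
by exists a2, b2; rewrite comp_lfunE e2 e1.
Qed.
Lemma presW_comp (phi psi : 'End(V)) : presW phi -> presW psi -> presW (psi \o phi)%VF.
Proof.
move=> h1 h2 a b; have [a1 [b1 e1]] := h2 a b; have [a2 [b2 e2]] := h1 a1 b1.
by exists a2, b2; rewrite comp_lfunE e2 e1.
Qed.

Lemma orbitU_b a b : b != 0 -> exists phi : 'End(V), [/\ is_autom phi, fixW phi, presU phi & phi (uv a b) = uv 1 0].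
Proof.
move=> nb.
exists (Aut (fRU (- (2%:R^-1 * b))) \o Aut (fLU ((1 - a) / (2%:R * b))))%VF; split.
- by apply: autom_comp; [exact: autom_LU | exact: autom_RU].
- by apply: fixW_comp; [exact: LU_fixW | exact: RU_fixW].
- by apply: presU_comp; [exact: LU_presU | exact: RU_presU].
- by rewrite comp_lfunE LU_uv RU_uv; congr uv; field; rewrite ?n2 ?nb.
Qed.

Lemma orbitU a b : (a != 0) || (b != 0) -> exists phi : 'End(V), [/\ is_autom phi, fixW phi, presU phi & phi (uv a b) = uv 1 0].
Proof.
case: (eqVneq b 0) => [-> | nb] /=; last by move=> _; apply: orbitU_b.
rewrite orbF => na.
have [phi [h1 h2 h3 h4]] := @orbitU_b a a na.
exists (phi \o Aut (fRU (2%:R^-1)))%VF; split.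
- by apply: autom_comp => //; exact: autom_RU.
- by apply: fixW_comp => //; exact: RU_fixW.
- by apply: presU_comp => //; exact: RU_presU.
- by rewrite comp_lfunE RU_uv -h4; congr (phi (uv _ _)); field.
Qed.

Lemma orbitW_d c d : d != 0 -> exists phi : 'End(V), [/\ is_autom phi, fixU phi, presW phi & phi (wv c d) = wv 1 0].
Proof.
move=> nd.
exists (Aut (fRW (- (2%:R^-1 * d))) \o Aut (fLW ((1 - c) / (2%:R * d))))%VF; split.
- by apply: autom_comp; [exact: autom_LW | exact: autom_RW].
- by apply: fixU_comp; [exact: LW_fixU | exact: RW_fixU].
- by apply: presW_comp; [exact: LW_presW | exact: RW_presW].
- by rewrite comp_lfunE LW_wv RW_wv; congr wv; field; rewrite ?n2 ?nd.
Qed.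

Lemma orbitW c d : (c != 0) || (d != 0) -> exists phi : 'End(V), [/\ is_autom phi, fixU phi, presW phi & phi (wv c d) = wv 1 0].
Proof.
case: (eqVneq d 0) => [-> | nd] /=; last by move=> _; apply: orbitW_d.
rewrite orbF => nc.
have [phi [h1 h2 h3 h4]] := @orbitW_d c c nc.
exists (phi \o Aut (fRW (2%:R^-1)))%VF; split.
- by apply: autom_comp => //; exact: autom_RW.
- by apply: fixU_comp => //; exact: RW_fixU.
- by apply: presW_comp => //; exact: RW_presW.
- by rewrite comp_lfunE RW_wv -h4; congr (phi (wv _ _)); field.
Qed.

End Seven.


Section Eight.
Variable F : fieldType.
Hypothesis n2 : (2%:R : F) != 0.
Hypothesis n3 : (3%:R : F) != 0.
Local Notation V := (V F).
Local Notation cc := (@cc F).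
Local Notation mk := (@mk F).
Local Notation uv := (@uv F).
Local Notation wv := (@wv F).
Local Notation Goal := (@Goal F).
Local Notation vP1 := (@vP1 F).
Local Notation vP2 := (@vP2 F).

Ltac unf8 := rewrite /vE /vA /vB /vC1 /vC2 /vF /vP1 /vP2 /vQ1 /vQ2 /uv /wv /ev /od.
Ltac vsolve8 := unf8; rewrite ?(mkZ, mkD, mkN, kmul_mk, fLU_mk, fRU_mk, fLW_mk, fRW_mk, fSG_mk) /Defs.half; apply: mk_eq; field; rewrite ?n2 ?n3 //; try assumption.

Lemma cls_W (T : {vspace V}) : ~ (exists c d, ((c != 0) || (d != 0)) /\ wv c d \in T) ->
  forall c d, wv c d \in T -> c = 0 /\ d = 0.
Proof.
move=> nW c d h; case: (eqVneq c 0) => hc; case: (eqVneq d 0) => hd //;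
  by exfalso; apply: nW; exists c, d; split => //; rewrite ?hc ?hd ?orbT.
Qed.

Lemma cls_U (T : {vspace V}) : ~ (exists a b, ((a != 0) || (b != 0)) /\ uv a b \in T) ->
  forall a b, uv a b \in T -> a = 0 /\ b = 0.
Proof.
move=> nW c d h; case: (eqVneq c 0) => hc; case: (eqVneq d 0) => hd //;
  by exfalso; apply: nW; exists c, d; split => //; rewrite ?hc ?hd ?orbT.
Qed.

Lemma LemmaA (T : {vspace V}) : gsub T -> T != fullv -> uv 1 0 \in T -> Goal T.
Proof.
move=> hT hp h1.
case: (classic (exists a b, b != 0 /\ uv a b \in T)) => [[a [b [nb hab]]] | nA].
  have h2 : uv 0 1 \in T.
    have -> : uv 0 1 = b^-1 *: (uv a b - a *: uv 1 0) by vsolve8.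
    by rewrite rpredZ // rpredB // rpredZ.
  case: (classic (exists c d, ((c != 0) || (d != 0)) /\ wv c d \in T)) => [[c [d [ncd hcd]]] | nW].
    have [phi [ha hfu hpw he]] := orbitW n2 ncd.
    apply: (goal_comp ha).
    have hT' := autom_gsub ha hT; have hp' := autom_proper ha hp.
    have u1 : uv 1 0 \in (phi @: T)%VS by rewrite -(hfu 1 0); apply: memv_img.
    have u2 : uv 0 1 \in (phi @: T)%VS by rewrite -(hfu 0 1); apply: memv_img.
    have w1 : wv 1 0 \in (phi @: T)%VS by rewrite -he; apply: memv_img.
    apply: (goal_comp (@autom_SG F)).
    have hT'' := autom_gsub (@autom_SG F) hT'; have hp'' := autom_proper (@autom_SG F) hp'.
    apply: goal_id; apply: Or43; apply/subvP; apply: (L_M3 n2 n3 hT'' hp'').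
    - by rewrite -SG_wv; apply: memv_img.
    - by rewrite -SG_uv; apply: memv_img.
    - by rewrite -SG_uv; apply: memv_img.
  have hW := cls_W nW.
  apply: (goal_comp (@autom_SG F)); apply: goal_id; apply: Or43.
  apply/subvP => y /memv_imgP [x xT ->]; rewrite SG_E; apply/memM3.
  have [e2 [e4 e9]] := L_U0 n2 n3 hT hp h1 h2 hW xT.
  by rewrite /fSG !mkcE e2 e4 e9 !opprK oppr0.
have hU : forall a b, uv a b \in T -> b = 0.
  move=> a b h; case: (eqVneq b 0) => // nb; exfalso; apply: nA; by exists a, b.
case: (classic (exists c d, ((c != 0) || (d != 0)) /\ wv c d \in T)) => [[c [d [ncd hcd]]] | nW].
  have [phi [ha hfu hpw he]] := orbitW n2 ncd.
  apply: (goal_comp ha).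
  have hT' := autom_gsub ha hT; have hp' := autom_proper ha hp.
  have u1 : uv 1 0 \in (phi @: T)%VS by rewrite -(hfu 1 0); apply: memv_img.
  have w1 : wv 1 0 \in (phi @: T)%VS by rewrite -he; apply: memv_img.
  have hU' : forall a b, uv a b \in (phi @: T)%VS -> b = 0.
    by move=> a b h; apply: (hU a); apply: (fixU_in ha hfu h).
  case: (classic (exists c d, d != 0 /\ wv c d \in (phi @: T)%VS)) => [[c' [d' [nd hw]]] | nW2].
    have w2 : wv 0 1 \in (phi @: T)%VS.
      have -> : wv 0 1 = d'^-1 *: (wv c' d' - c' *: wv 1 0) by vsolve8.
      by rewrite rpredZ // rpredB // rpredZ.
    by apply: goal_id; apply: Or43; apply/subvP; apply: (L_M3 n2 n3 hT' hp').
  have hW' : forall c d, wv c d \in (phi @: T)%VS -> d = 0.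
    move=> c0 d0 h; case: (eqVneq d0 0) => // nd; exfalso; apply: nW2; by exists c0, d0.
  by apply: goal_id; apply: Or44; apply/subvP; apply: (L_M4 n2 n3 hT' hp').
by apply: goal_id; apply: Or43; apply/subvP; apply: (L_M3b n2 n3 hT hp h1 hU (cls_W nW)).
Qed.

Lemma LemmaU (T : {vspace V}) a b : gsub T -> T != fullv -> (a != 0) || (b != 0) -> uv a b \in T -> Goal T.
Proof.
move=> hT hp nab h; have [phi [ha _ _ he]] := orbitU n2 nab.
apply: (goal_comp ha); apply: LemmaA.
- exact: autom_gsub.
- exact: autom_proper.
- by rewrite -he; apply: memv_img.
Qed.

Lemma LemmaP (T : {vspace V}) : gsub T -> T != fullv -> vP1 \in T -> NP T -> Goal T.
Proof.
move=> hT hp hP [nU nW].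
case: (classic (forall y, y \in T -> cc y 7 = 0 /\ cc y 8 = 0 /\ cc y 9 = 0)) => [hO | nO].
  by apply: goal_id; apply: Or44; apply/subvP; apply: (L_M4b n2 n3 hT hP hO).
have [x hx] := not_all_ex_not _ _ nO.
have [xT hx'] := imply_to_and _ _ hx.
have [g hg] := L_B n2 n3 hT hP nW xT hx'.
set s := - (2%:R^-1 * g).
have ha := @autom_LW F s.
apply: (goal_comp ha).
have hT' := autom_gsub ha hT; have hp' := autom_proper ha hp.
have p1 : vP1 \in (Aut (fLW s) @: T)%VS.
  have <- : Aut (fLW s) vP1 = vP1 by rewrite LW_E; vsolve8.
  by apply: memv_img.
have p2 : vP2 \in (Aut (fLW s) @: T)%VS.
  have e : Aut (fLW s) (uv 0 1 + wv g 1) = 2%:R *: vP2 by rewrite LW_E /s; vsolve8.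
  have -> : vP2 = 2%:R^-1 *: (2%:R *: vP2) by vsolve8.
  by rewrite -e rpredZ // memv_img.
have [_ nW'] := NP_img ha (fix_pres_U (@LW_fixU F s)) (@LW_presW F s) (conj nU nW).
by apply: goal_id; apply: Or42; apply/subvP; apply: (L_M2 n2 n3 hT' p1 p2 nW').
Qed.

Lemma Main (T : {vspace V}) : gsub T -> T != fullv -> Goal T.
Proof.
move=> hT hp.
case: (classic (exists a b, ((a != 0) || (b != 0)) /\ uv a b \in T)) => [[a [b [nab h]]] | nU].
  exact: (LemmaU hT hp nab h).
case: (classic (exists c d, ((c != 0) || (d != 0)) /\ wv c d \in T)) => [[c [d [ncd h]]] | nW].
  apply: (goal_comp (@autom_SG F)); apply: (@LemmaU _ c d).
  - exact: autom_gsub (@autom_SG F) hT.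
  - exact: autom_proper (@autom_SG F) hp.
  - exact: ncd.
  - by rewrite -SG_wv; apply: memv_img.
have hU := cls_U nU; have hW := cls_W nW.
case: (classic (forall x, x \in T -> od x = 0)) => [hO | nO].
  apply: goal_id; apply: Or41; apply/subvP => x xT; apply/memEv.
  have := hO _ xT; move/(congr1 (fun v => [:: cc v 6; cc v 7; cc v 8; cc v 9])).
  by rewrite /od !mkcE !cc0 => -[-> -> -> ->].
have [x hx] := not_all_ex_not _ _ nO.
have [xT hx'] := imply_to_and _ _ hx.
have hod := gsub_od hT xT.
have hy : 2%:R *: od x = uv (cc x 6 + cc x 8) (cc x 7 - cc x 9) + wv (cc x 6 - cc x 8) (cc x 7 + cc x 9) by vsolve8.
have od0 : forall k : F, k *: od x = 0 -> k = 0.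
  move=> k /eqP; rewrite scaler_eq0 => /orP [/eqP //|/eqP h]; by exfalso; apply: hx'.
have nab : (cc x 6 + cc x 8 != 0) || (cc x 7 - cc x 9 != 0).
  rewrite -negb_and; apply/negP => /andP [/eqP ha /eqP hb].
  move: hy; rewrite ha hb (_ : uv 0 0 = 0) ?add0r; last by unf8; rewrite mk0 oppr0.
  move=> e; have : wv (cc x 6 - cc x 8) (cc x 7 + cc x 9) \in T by rewrite -e rpredZ.
  move/hW => [hc hd]; move: e; rewrite hc hd (_ : wv 0 0 = 0); last by unf8; rewrite mk0 oppr0.
  by move/od0/eqP; rewrite (negbTE n2).
have ncd : (cc x 6 - cc x 8 != 0) || (cc x 7 + cc x 9 != 0).
  rewrite -negb_and; apply/negP => /andP [/eqP ha /eqP hb].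
  move: hy; rewrite ha hb (_ : wv 0 0 = 0) ?addr0; last by unf8; rewrite mk0 oppr0.
  move=> e; have : uv (cc x 6 + cc x 8) (cc x 7 - cc x 9) \in T by rewrite -e rpredZ.
  move/hU => [hc hd]; move: e; rewrite hc hd (_ : uv 0 0 = 0); last by unf8; rewrite mk0 oppr0.
  by move/od0/eqP; rewrite (negbTE n2).
have [phU [haU hfwU hpU heU]] := orbitU n2 nab.
have [phW [haW hfuW hpW heW]] := orbitW n2 ncd.
have ha := autom_comp haU haW.
apply: (goal_comp ha); apply: LemmaP.
- exact: autom_gsub.
- exact: autom_proper.
- have e : (phW \o phU)%VF (2%:R *: od x) = 2%:R *: vP1.
    rewrite hy comp_lfunE linearD /= heU hfwU linearD /= heW hfuW; vsolve8.
  have -> : vP1 = 2%:R^-1 *: (2%:R *: vP1) by vsolve8.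
  by rewrite -e rpredZ // memv_img // rpredZ.
- apply: NP_img => //.
  + exact: presU_comp hpU (fix_pres_U hfuW).
  + exact: presW_comp (fix_pres_W hfwU) hpW.
Qed.

End Eight.


Section Nine.
Variable F : fieldType.
Local Notation V := (V F).
Local Notation cc := (@cc F).
Local Notation mk := (@mk F).

Lemma gsub_M1 : gsub (M1 F).
Proof.
split; first by move=> x _; apply: ev_in.
move=> x y; rewrite /M1 => /memEv [h6 [h7 [h8 h9]]] /memEv [k6 [k7 [k8 k9]]].
apply/memEv; rewrite (vecE x) (vecE y) kmul_mk !mkcE h6 h7 h8 h9 k6 k7 k8 k9.
by repeat split; ring.
Qed.

Lemma gsub_M2 : gsub (M2 F).
Proof.
split.
  by move=> x /memM2 [h2 [h3 [h4 [h8 h9]]]]; apply/memM2; rewrite /ev !mkcE h2 h3 h4.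
move=> x y /memM2 [h2 [h3 [h4 [h8 h9]]]] /memM2 [k2 [k3 [k4 [k8 k9]]]].
apply/memM2; rewrite (vecE x) (vecE y) kmul_mk !mkcE h2 h3 h4 h8 h9 k2 k3 k4 k8 k9.
by repeat split; ring.
Qed.

Lemma gsub_M3 : gsub (M3 F).
Proof.
split.
  by move=> x /memM3 [h2 [h4 h9]]; apply/memM3; rewrite /ev !mkcE h2 h4.
move=> x y /memM3 [h2 [h4 h9]] /memM3 [k2 [k4 k9]].
apply/memM3; rewrite (vecE x) (vecE y) kmul_mk !mkcE h2 h4 h9 k2 k4 k9.
by repeat split; ring.
Qed.

Lemma gsub_M4 : gsub (M4 F).
Proof.
split.
  by move=> x /memM4 [h4 [h7 h9]]; apply/memM4; rewrite /ev !mkcE h4.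
move=> x y /memM4 [h4 [h7 h9]] /memM4 [k4 [k7 k9]].
apply/memM4; rewrite (vecE x) (vecE y) kmul_mk !mkcE h4 h7 h9 k4 k7 k9.
by repeat split; ring.
Qed.

Lemma proper_M1 : M1 F != fullv.
Proof.
apply/negP => /eqP e; have := memvf (@vP1 F); rewrite -e /M1 => /memEv [h _].
by move: h; rewrite /vP1 mkcE => /eqP; rewrite oner_eq0.
Qed.
Lemma proper_M2 : M2 F != fullv.
Proof.
apply/negP => /eqP e; have := memvf (@vC2 F); rewrite -e => /memM2 [_ [_ [h _]]].
by move: h; rewrite /vC2 mkcE => /eqP; rewrite oner_eq0.
Qed.
Lemma proper_M3 : M3 F != fullv.
Proof.
apply/negP => /eqP e; have := memvf (@vC2 F); rewrite -e => /memM3 [_ [h _]].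
by move: h; rewrite /vC2 mkcE => /eqP; rewrite oner_eq0.
Qed.
Lemma proper_M4 : M4 F != fullv.
Proof.
apply/negP => /eqP e; have := memvf (@vC2 F); rewrite -e => /memM4 [h _].
by move: h; rewrite /vC2 mkcE => /eqP; rewrite oner_eq0.
Qed.

End Nine.

Unset Implicit Arguments.

Theorem theorem4p1 (F : closedFieldType)
  (h2 : (2%N \notin [pchar F])) (h3 : (3%N \notin [pchar F]))
  (S : {vspace V F}) :
  is_maximal_subalg S ->
  exists phi : 'End(V F), is_autom phi /\
    [\/ (phi @: S)%VS = M1 F, (phi @: S)%VS = M2 F,
        (phi @: S)%VS = M3 F | (phi @: S)%VS = M4 F].
Proof.
move=> hmax.
have n2 : (2%:R : F) != 0.
  by move: h2; rewrite inE /=.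
have n3 : (3%:R : F) != 0.
  by move: h3; rewrite inE /=.
have [hS [hp _]] := hmax.
have [psi [ha hc]] := Main n2 n3 (subalg_gsub hS) hp.
exists psi; split => //.
case: hc => hc.
- by apply: Or41; apply: final_max hmax ha (gsub_M1 F) (proper_M1 F) hc.
- by apply: Or42; apply: final_max hmax ha (gsub_M2 F) (proper_M2 F) hc.
- by apply: Or43; apply: final_max hmax ha (gsub_M3 F) (proper_M3 F) hc.
- by apply: Or44; apply: final_max hmax ha (gsub_M4 F) (proper_M4 F) hc.
Qed.
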